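(* Let $(\mathcal B,<)$ be a monoidal poset with unique maximal element $B_0$. (i) For each $B\in\mathcal B$, each element $w\in W$ of minimal length such that $B=wB_0$, and each node $i$ with $l(r_iw)<l(w)$, we have $r_iB>B$. (ii) For each $B\in\mathcal B$, if $w,w'\in W$ are of minimal length such that $B=wB_0=w'B_0$, then $l(w)=l(w')$, and for each node $i$ with $r_iB>B$ there is $w''\in W$ of length $l(w)$ such that $B=w''B_0$ and $l(r_iw'')<l(w'')$.
   Context: Setting: $M$ is a spherical simply laced Coxeter diagram with nodes $1,\dots,n$ ($i\not\sim j$ means distinct nodes not joined by an edge, or equal); $W$ its Weyl group with length function $l$, positive roots $\Phi^+$, fundamental roots $\alpha_i$, reflections $r_i$, roots of squared length $2$; height $\mathrm{ht}(\sum a_k\alpha_k)=\sum a_k$. For a set $B$ of mutually orthogonal positive roots, $wB=\Phi^+\cap\{\pm w\beta:\beta\in B\}$. A $W$-orbit $\mathcal B$ of such sets is admissible if for every $B\in\mathcal B$, all nodes $i\not\sim j$ and root $\gamma$ with $\gamma,\gamma-\alpha_i+\alpha_j\in B$, $r_iB=r_jB$. For $B,C\in\mathcal B$ write $B\prec C$ if $B\ne C$ and the minimal height of an element of $B\setminus C$ is strictly smaller than the minimal height of an element of $C\setminus B$. For admissible $\mathcal B$, the monoidal poset $(\mathcal B,<)$ is $\mathcal B$ with the partial order $<$ given by the transitive closure of $\{(B,r_jB): B\in\mathcal B,\ j\text{ a node},\ B\prec r_jB\}$; $>$ is the reverse relation. Such a poset has a unique maximal element. *)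

(* Defs.v *)
From HB Require Import structures.
From mathcomp Require Import all_boot all_order all_algebra.
From mathcomp Require Import finmap.
Set Implicit Arguments. Unset Strict Implicit. Unset Printing Implicit Defensive.
Import Order.TTheory GRing.Theory Num.Theory.
Local Open Scope ring_scope.
Local Open Scope fset_scope.

(* Root lattice Z^n, vectors as integer row vectors; the diagram M is given by
   a relation [adj] on the nodes 'I_n (nodes 1..n of the paper = 'I_n). *)
Definition vec (n : nat) := 'rV[int]_n.

Section Weyl.
Variables (n : nat) (adj : rel 'I_n).

Definition cartan : 'M[int]_n :=
  \matrix_(i, j) (if i == j then 2 else if adj i j then -1 else 0).

(* The W-invariant bilinear bform, roots having squared length 2. *)
Definition bform (x y : vec n) : int := (x *m cartan *m y^T) 0 0.

Definition alpha (i : 'I_n) : vec n := \row_j ((i == j)%:R : int).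

Definition wrefl (i : 'I_n) (x : vec n) : vec n := x - bform x (alpha i) *: alpha i.

(* A word [:: i1; ...; ik] denotes r_{i1} ... r_{ik} in W. *)
Definition wact (s : seq 'I_n) (x : vec n) : vec n := foldr wrefl x s.

(* Equality of elements of W (via the faithful action on the root lattice;
   a linear map is determined by its values on the basis alpha_j). *)
Definition weqb (s t : seq 'I_n) : bool :=
  [forall j, wact s (alpha j) == wact t (alpha j)].

Lemma len_ex (s : seq 'I_n) :
  exists k, [exists t : k.-tuple 'I_n, weqb t s].
Proof.
exists (size s); apply/existsP; exists (in_tuple s).
by apply/forallP => j /=.
Qed.

Definition wlen (s : seq 'I_n) : nat := ex_minn (len_ex s).

Definition is_root (x : vec n) : Prop := exists s i, wact s (alpha i) = x.

Definition rpos (x : vec n) : bool := [forall j, 0 <= x 0 j].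

Definition rht (x : vec n) : int := \sum_j x 0 j.

(* w B = Phi^+ cap {+- w beta : beta in B}; for a root beta exactly one of
   +- w beta is positive. *)
Definition wact_set (s : seq 'I_n) (B : {fset vec n}) : {fset vec n} :=
  [fset (if rpos (wact s b) then wact s b else - wact s b) | b in B].

Definition orth_pos_roots (B : {fset vec n}) : Prop :=
  (forall b, b \in B -> is_root b /\ rpos b) /\
  (forall b b', b \in B -> b' \in B -> b != b' -> bform b b' = 0).

Definition in_Borbit (B0 B : {fset vec n}) : Prop := exists s, B = wact_set s B0.

Definition nonadj (i j : 'I_n) : bool := (i == j) || ~~ adj i j.

Definition admissible (B0 : {fset vec n}) : Prop :=
  forall B, in_Borbit B0 B ->
  forall (i j : 'I_n) (g : vec n), nonadj i j ->
    g \in B -> (g - alpha i + alpha j)%R \in B ->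
    wact_set [:: i] B = wact_set [:: j] B.

Definition mprec (B C : {fset vec n}) : Prop :=
  B != C /\ (exists c, c \in C `\` B) /\
  exists b, b \in B `\` C /\ forall c, c \in C `\` B -> rht b < rht c.

Definition mstep (B0 B C : {fset vec n}) : Prop :=
  in_Borbit B0 B /\ exists j, C = wact_set [:: j] B /\ mprec B C.

Inductive mlt (B0 : {fset vec n}) : {fset vec n} -> {fset vec n} -> Prop :=
| mlt_step B C : mstep B0 B C -> mlt B0 B C
| mlt_trans B C D : mlt B0 B C -> mlt B0 C D -> mlt B0 B D.

Definition minimal_for (B0 B : {fset vec n}) (s : seq 'I_n) : Prop :=
  wact_set s B0 = B /\ forall t, wact_set t B0 = B -> (wlen s <= wlen t)%N.

End Weyl.

(* Main.v *)
Require Import Defs.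
From HB Require Import structures.
From mathcomp Require Import all_boot all_order all_algebra.
From mathcomp Require Import finmap zify ring lra.
Import Order.TTheory GRing.Theory Num.Theory.
Set Implicit Arguments. Unset Strict Implicit. Unset Printing Implicit Defensive.
Local Open Scope ring_scope.
Local Open Scope fset_scope.
Local Open Scope ring_scope.

Section Alg.
Variables (n : nat) (adj : rel 'I_n).
Implicit Types (x y z : vec n) (i j k l : 'I_n) (a : int).
Hypothesis adj_sym : symmetric adj.
Hypothesis adj_irr : irreflexive adj.

Notation bf := (bform adj).
Notation rf := (wrefl adj).

Lemma cartan_sym : (cartan adj)^T = cartan adj.
Proof.
apply/matrixP => i j; rewrite !mxE eq_sym adj_sym //.
Qed.

Lemma bformE x y : bf x y = \sum_a \sum_b x 0 a * cartan adj a b * y 0 b.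
Proof.
rewrite /bform mxE; apply: eq_bigr => a _.
rewrite mxE big_distrl /=; apply: eq_bigr => b _; rewrite !mxE.
Abort.

Lemma bformDl x y z : bf (x + y) z = bf x z + bf y z.
Proof. by rewrite /bform !mulmxDl mxE. Qed.
Lemma bformDr x y z : bf z (x + y) = bf z x + bf z y.
Proof. by rewrite /bform linearD /= !mulmxDr mxE. Qed.
Lemma bformZl a x z : bf (a *: x) z = a * bf x z.
Proof. by rewrite /bform -!scalemxAl mxE. Qed.
Lemma bformZr a x z : bf z (a *: x) = a * bf z x.
Proof. by rewrite /bform linearZ /= -!scalemxAr mxE. Qed.
Lemma bformC x y : bf x y = bf y x.
Proof.
rewrite /bform.
rewrite -(trmxK (x *m cartan adj *m y^T)) [X in X = _]mxE.
rewrite !trmx_mul trmxK cartan_sym mulmxA.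
done.
Qed.

Lemma bformBl x y z : bf (x - y) z = bf x z - bf y z.
Proof. by rewrite /bform mulmxBl mulmxBl !mxE. Qed.
Lemma bformBr x y z : bf z (x - y) = bf z x - bf z y.
Proof. by rewrite bformC bformBl !(bformC z). Qed.
Lemma bformNl x z : bf (- x) z = - bf x z.
Proof. by rewrite -scaleN1r bformZl mulN1r. Qed.
Lemma bformNr x z : bf z (- x) = - bf z x.
Proof. by rewrite -scaleN1r bformZr mulN1r. Qed.
Lemma bform0l z : bf 0 z = 0.
Proof. by rewrite /bform !mul0mx mxE. Qed.

Lemma alpha_delta i : alpha i = (delta_mx 0 i : 'rV[int]_n).
Proof. by apply/rowP => j; rewrite !mxE /= eq_sym. Qed.

Definition cart (k l : 'I_n) : int := if k == l then 2 else if adj k l then -1 else 0.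

Lemma bf_alpha k l : bf (alpha k) (alpha l) = cart k l.
Proof.
rewrite /bform !alpha_delta -rowE trmx_delta -colE !mxE //.
Qed.

Definition U : 'M[int]_n :=
  \matrix_(i, j) (if i == j then 1 else if ((i < j)%N && adj i j) then -1 else 0).

Lemma cartanU : cartan adj = U + U^T.
Proof.
apply/matrixP => i j; rewrite !mxE eq_sym.
case: eqVneq => [e|ij]; first by [].
case: (ltngtP i j) => [lt|lt|e]; last by move/val_inj: e ij => ->; rewrite eqxx.
- by case: (adj i j).
- by rewrite /= adj_sym; case: (adj j i).
Qed.

Definition qf x : int := (x *m U *m x^T) 0 0.

Lemma bf_even x : bf x x = 2 * qf x.
Proof.
rewrite /bform cartanU mulmxDr mulmxDl mxE.
have -> : (x *m U^T *m x^T) 0 0 = ((x *m U^T *m x^T)^T) 0 0 by rewrite [RHS]mxE.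
rewrite !trmx_mul !trmxK mulmxA /qf; ring.
Qed.

Definition p i x := bf x (alpha i).

Lemma cartC k l : cart k l = cart l k.
Proof. by rewrite /cart eq_sym adj_sym. Qed.
Lemma cart_ii i : cart i i = 2.
Proof. by rewrite /cart eqxx. Qed.

Lemma rfE i x : rf i x = x - p i x *: alpha i.
Proof. by []. Qed.

Lemma p_alpha k l : p k (alpha l) = cart l k.
Proof. by rewrite /p bf_alpha. Qed.

Lemma p_rf k i x : p k (rf i x) = p k x - p i x * cart i k.
Proof. by rewrite rfE /p bformBl bformZl bf_alpha. Qed.

Lemma pD k x y : p k (x + y) = p k x + p k y.
Proof. by rewrite /p bformDl. Qed.
Lemma pB k x y : p k (x - y) = p k x - p k y.
Proof. by rewrite /p bformBl. Qed.
Lemma pN k x : p k (- x) = - p k x.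
Proof. by rewrite /p bformNl. Qed.

Lemma rhtD x y : rht (x + y) = rht x + rht y.
Proof. by rewrite /rht -big_split; apply: eq_bigr => j _; rewrite mxE. Qed.
Lemma rhtN x : rht (- x) = - rht x.
Proof. by rewrite /rht -sumrN; apply: eq_bigr => j _; rewrite mxE. Qed.
Lemma rhtB x y : rht (x - y) = rht x - rht y.
Proof. by rewrite rhtD rhtN. Qed.
Lemma rhtZ (a : int) x : rht (a *: x) = a * rht x.
Proof. by rewrite /rht mulr_sumr; apply: eq_bigr => j _; rewrite mxE. Qed.
Lemma rht_alpha i : rht (alpha i) = 1.
Proof.
rewrite /rht (bigD1 i) //= big1 ?addr0; first by rewrite mxE eqxx.
by move=> j ji; rewrite mxE eq_sym (negPf ji).
Qed.

Lemma rht_rf i x : rht (rf i x) = rht x - p i x.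
Proof. by rewrite rfE rhtB rhtZ rht_alpha mulr1. Qed.

Lemma bf_rf i x y : bf (rf i x) (rf i y) = bf x y.
Proof.
rewrite !rfE bformBl !bformBr !bformZl !bformZr bf_alpha cart_ii.
rewrite (bformC (alpha i) y) -/(p i y) -/(p i x); ring.
Qed.

Lemma rfK i x : rf i (rf i x) = x.
Proof.
rewrite [in LHS]rfE p_rf cart_ii rfE.
have -> : p i x - p i x * 2 = - p i x by ring.
by rewrite scaleNr opprK subrK.
Qed.

Lemma rfN i x : rf i (- x) = - rf i x.
Proof. by rewrite !rfE pN scaleNr opprB opprK addrC. Qed.

Lemma rfD i x y : rf i (x + y) = rf i x + rf i y.
Proof. by rewrite !rfE pD scalerDl opprD addrACA. Qed.

Lemma rfZ i (a : int) x : rf i (a *: x) = a *: rf i x.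
Proof. by rewrite !rfE /p bformZl scalerBr scalerA. Qed.

Lemma rf_comm i j x : cart i j = 0 -> rf i (rf j x) = rf j (rf i x).
Proof.
move=> c.
rewrite [LHS]rfE [RHS]rfE !p_rf c (cartC j i) c !mulr0 !subr0.
rewrite !rfE; rewrite -!addrA; congr (_ + _); rewrite addrC //.
Qed.

Lemma rf_braid i j x : cart i j = -1 ->
  rf i (rf j (rf i x)) = rf j (rf i (rf j x)).
Proof.
move=> c; have c' : cart j i = -1 by rewrite cartC.
set a := p i x; set b := p j x.
have E1 : forall k l, cart k l = -1 -> rf k (rf l (rf k x)) =
   rf l (rf k x) - p l x *: alpha k.
  move=> k l ckl; rewrite [LHS]rfE !p_rf cart_ii (cartC l k) ckl.
  by congr (_ - _ *: _); ring.
rewrite E1 // E1 // !rfE !p_rf c c'.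
by apply/rowP => k; rewrite !mxE; ring.
Qed.

Hypothesis spherical : forall x : vec n, x != 0 -> 0 < bf x x.

Lemma bf_expand x y : bf (x - y) (x - y) = bf x x + bf y y - 2 * bf x y.
Proof. rewrite bformBl !bformBr (bformC y x); ring. Qed.
Lemma bf_expandD x y : bf (x + y) (x + y) = bf x x + bf y y + 2 * bf x y.
Proof. rewrite bformDl !bformDr (bformC y x); ring. Qed.

Lemma norm_ge2 x : x != 0 -> 2 <= bf x x.
Proof.
move=> /spherical; rewrite bf_even => h.
lia.
Qed.

Lemma bf_eq0 x : bf x x = 0 -> x = 0.
Proof. move=> h; apply/eqP/negPn/negP => /spherical; rewrite h ltxx //. Qed.

Lemma root_neq0 x : bf x x = 2 -> x != 0.
Proof. by move=> h; apply/negP => /eqP e; move: h; rewrite e bform0l. Qed.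

Definition xp x : vec n := \row_j (if 0 <= x 0 j then x 0 j else 0).
Definition xm x : vec n := \row_j (if 0 <= x 0 j then 0 else - x 0 j).

Lemma xpm x : x = xp x - xm x.
Proof. apply/rowP => j; rewrite !mxE; case: ifP => _; [by rewrite subr0 | by rewrite sub0r opprK]. Qed.

Lemma bformE x y : bf x y = \sum_b \sum_a x 0 a * cartan adj a b * y 0 b.
Proof.
rewrite /bform mxE; apply: eq_bigr => b _; rewrite !mxE big_distrl.
by apply: eq_bigr => a _; rewrite !mxE.
Qed.

Lemma xp_ge0 x j : 0 <= xp x 0 j.
Proof. rewrite mxE; case: ifP => hx; [lia| move/negbT: hx; rewrite -ltNge; lia]. Qed.
Lemma xm_ge0 x j : 0 <= xm x 0 j.
Proof. rewrite mxE; case: ifP => hx; [lia| move/negbT: hx; rewrite -ltNge; lia]. Qed.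

Lemma bf_xpm x : bf (xp x) (xm x) <= 0.
Proof.
rewrite bformE; apply: sumr_le0 => b _; apply: sumr_le0 => a _.
rewrite !mxE; case: eqVneq => [->|ab].
  by case: ifP => h; rewrite ?mulr0 ?mul0r.
move: (xp_ge0 x a) (xm_ge0 x b); rewrite !mxE.
case: (adj a b) => ha hb; last by rewrite mulr0 mul0r.
by rewrite mulrN1 mulNr oppr_le0; apply: mulr_ge0.
Qed.

Lemma aux_p (a : int) : (if 0 <= a then a else 0) = 0 -> 0 <= - a.
Proof. case: ifP => hx; [lia| move/negbT: hx; rewrite -ltNge; lia]. Qed.
Lemma aux_m (a : int) : (if 0 <= a then 0 else - a) = 0 -> 0 <= a.
Proof. case: ifP => hx; [lia| move/negbT: hx; rewrite -ltNge; lia]. Qed.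

Lemma dichot x : bf x x = 2 -> rpos x || rpos (- x).
Proof.
move=> h.
have e : bf x x = bf (xp x) (xp x) + bf (xm x) (xm x) - 2 * bf (xp x) (xm x).
  by rewrite {1 2}(xpm x) bf_expand.
have := bf_xpm x.
have [zp|nzp] := eqVneq (xp x) 0.
  move=> _; apply/orP; right; apply/forallP => j.
  move/rowP: zp => /(_ j); rewrite !mxE; exact: aux_p.
have [zm|nzm] := eqVneq (xm x) 0.
  move=> _; apply/orP; left; apply/forallP => j.
  move/rowP: zm => /(_ j); rewrite !mxE; exact: aux_m.
have := norm_ge2 nzp; have := norm_ge2 nzm; lia.
Qed.





Lemma rpos_ht x : rpos x -> x != 0 -> 0 < rht x.
Proof.
move=> /forallP hp nz; rewrite lt0r; apply/andP; split; last first.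
  by rewrite /rht; apply: sumr_ge0 => j _; exact: hp.
have h0 : forall j, true -> 0 <= x 0 j by move=> j _; exact: hp.
apply/negP => /eqP /(psumr_eq0P h0) h; move/negP: nz; apply; apply/eqP/rowP => j.
by rewrite mxE h.
Qed.

Lemma root_ht x : bf x x = 2 -> (rpos x /\ 0 < rht x) \/ (~~ rpos x /\ rht x < 0).
Proof.
move=> r; have nz := root_neq0 r.
case hp: (rpos x); first by left; split => //; exact: rpos_ht.
right; split => //.
have := dichot r; rewrite hp /= => hn.
have := rpos_ht hn; rewrite oppr_eq0 rhtN => /(_ nz); rewrite oppr_gt0 //.
Qed.

Lemma root_ht0 x : bf x x = 2 -> rht x != 0.
Proof. by move/root_ht => [[_ h]|[_ h]]; apply/eqP => e; move: h; rewrite e ltxx. Qed.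

Lemma L0 u v : bf u u = 2 -> bf v v = 2 -> bf u v = 1 -> rht u != rht v.
Proof.
move=> hu hv huv; have : bf (u - v) (u - v) = 2 by rewrite bf_expand hu hv huv.
move/root_ht0; rewrite rhtB subr_eq0 //.
Qed.

Lemma bf_le1 u v : bf u u = 2 -> bf v v = 2 -> u != v -> bf u v <= 1.
Proof.
move=> hu hv uv; have : u - v != 0 by rewrite subr_eq0.
move/norm_ge2; rewrite bf_expand hu hv; lia.
Qed.

Lemma bf_eq2 u v : bf u u = 2 -> bf v v = 2 -> bf u v = 2 -> u = v.
Proof.
move=> hu hv huv; apply/eqP; apply: contraT => uv.
have := bf_le1 hu hv uv; rewrite huv //.
Qed.

Lemma bf_geN1 u v : bf u u = 2 -> bf v v = 2 -> u != - v -> -1 <= bf u v.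
Proof.
move=> hu hv uv; have hv' : bf (- v) (- v) = 2 by rewrite bformNl bformNr opprK.
have := bf_le1 hu hv' uv; rewrite bformNr; lia.
Qed.

Lemma bf_eqN2 u v : bf u u = 2 -> bf v v = 2 -> bf u v = -2 -> u = - v.
Proof.
move=> hu hv huv; apply/eqP; apply: contraT => uv.
have := bf_geN1 hu hv uv; rewrite huv //.
Qed.

Lemma alpha_root i : bf (alpha i) (alpha i) = 2.
Proof. by rewrite bf_alpha cart_ii. Qed.

Lemma root_rf i x : bf x x = 2 -> bf (rf i x) (rf i x) = 2.
Proof. by rewrite bf_rf. Qed.
Lemma root_N x : bf x x = 2 -> bf (- x) (- x) = 2.
Proof. by rewrite bformNl bformNr opprK. Qed.

Lemma p_range i x : bf x x = 2 -> rpos x -> x != alpha i -> -1 <= p i x <= 1.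
Proof.
move=> r hp nx; apply/andP; split.
  apply: bf_geN1 => //; first exact: alpha_root.
  apply/negP => /eqP e; move: hp; rewrite e => /forallP /(_ i).
  by rewrite !mxE eqxx.
exact: bf_le1 (alpha_root i) nx.
Qed.

Lemma rpos_rf i x : bf x x = 2 -> rpos x -> x != alpha i -> rpos (rf i x).
Proof.
move=> r hp nx; have /andP[l1 l2] := p_range r hp nx.
have hh : 0 < rht x by apply: rpos_ht => //; exact: root_neq0.
case: (root_ht (root_rf i r)) => [[//]|[_]].
rewrite rht_rf; lia.
Qed.

Lemma seq_min (T : eqType) (s : seq T) (P : pred T) (f : T -> int) :
  (exists t, t \in s /\ P t) ->
  exists m, [/\ m \in s, P m & forall w, w \in s -> P w -> f m <= f w].
Proof.
elim: s => [[t [//]]|a s IH [t [xs Px]]].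
have [Pa|nPa] := boolP (P a).
  have [hs|hs] := boolP (has P s).
    have [w ws Pw] := hasP hs.
    have [m [ms Pm mmin]] := IH (ex_intro _ w (conj ws Pw)).
    have [le|lt] := lerP (f a) (f m).
      exists a; split => //; first exact: mem_head.
      move=> t0; rewrite inE => /orP [/eqP -> //|t0s Pt0].
      exact: le_trans le (mmin _ t0s Pt0).
    exists m; split => //; first by rewrite inE ms orbT.
    move=> t0; rewrite inE => /orP [/eqP -> _|t0s Pt0]; first exact: ltW.
    exact: mmin.
  exists a; split => //; first exact: mem_head.
  move=> t0; rewrite inE => /orP [/eqP -> //|t0s Pt0].
  by move/hasPn: hs => /(_ t0 t0s); rewrite Pt0.
move: xs; rewrite inE => /orP [/eqP xa|xs]; first by move: nPa; rewrite -xa Px.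
have [m [ms Pm mmin]] := IH (ex_intro _ t (conj xs Px)).
exists m; split => //; first by rewrite inE ms orbT.
move=> t0; rewrite inE => /orP [/eqP ->|t0s Pt0]; first by rewrite (negPf nPa).
exact: mmin.
Qed.

Lemma fset_min (B : {fset vec n}) (P : pred (vec n)) (f : vec n -> int) :
  (exists x, x \in B /\ P x) ->
  exists m, [/\ m \in B, P m & forall y, y \in B -> P y -> f m <= f y].
Proof. exact: seq_min. Qed.

Definition nrm x := if rpos x then x else - x.
Definition good (B : {fset vec n}) :=
  (forall b, b \in B -> bf b b = 2 /\ rpos b) /\
  (forall b b', b \in B -> b' \in B -> b != b' -> bf b b' = 0).

Lemma nrm_root x : bf x x = 2 -> bf (nrm x) (nrm x) = 2 /\ rpos (nrm x).
Proof.
rewrite /nrm => r; case: ifP => hp; first by [].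
by split; [exact: root_N | move: (dichot r); rewrite hp].
Qed.

Lemma nrm_pos x : rpos x -> nrm x = x.
Proof. by rewrite /nrm => ->. Qed.

Lemma nrmN x : bf x x = 2 -> nrm (- x) = nrm x.
Proof.
move=> r; rewrite /nrm; have nz := root_neq0 r.
case hp: (rpos x); case hn: (rpos (- x)) => //.
- have := rpos_ht hp nz; have := rpos_ht hn; rewrite oppr_eq0 rhtN => /(_ nz).
  rewrite oppr_gt0 => a b; have := lt_trans a b; rewrite ltxx //.
- by rewrite opprK.
- by move: (dichot r); rewrite hp hn.
Qed.

Lemma nrm_sign x : nrm x = x \/ nrm x = - x.
Proof. by rewrite /nrm; case: ifP; [left|right]. Qed.

Lemma wact_root s x : bf x x = 2 -> bf (wact adj s x) (wact adj s x) = 2.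
Proof. by elim: s => //= i s IH r; rewrite bf_rf IH. Qed.

Lemma wset1E i B : wact_set adj [:: i] B = [fset nrm (rf i b) | b in B].
Proof. by []. Qed.

Lemma wset_cons i s B : (forall b, b \in B -> bf b b = 2) ->
  wact_set adj (i :: s) B = wact_set adj [:: i] (wact_set adj s B).
Proof.
move=> hB; apply/fsetP => c; apply/imfsetP/imfsetP => /=.
  move=> [b bB ->]; exists (nrm (wact adj s b)); first by apply/imfsetP; exists b.
  rewrite -/(nrm _) -/(nrm _) /=; case: (nrm_sign (wact adj s b)) => -> //.
  by rewrite rfN nrmN // root_rf // wact_root // hB.
move=> [c' /imfsetP [b bB ->] ->]; exists b => //.
rewrite -/(nrm _) -/(nrm _) /=; case: (nrm_sign (wact adj s b)) => -> //.
by rewrite rfN nrmN // root_rf // wact_root // hB.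
Qed.

Notation ws i B := (wact_set adj [:: i] B).

Lemma good_nil B : good B -> wact_set adj [::] B = B.
Proof.
move=> [hB _]; apply/fsetP => c; apply/imfsetP/idP => /=.
  by move=> [b bB ->]; rewrite -/(nrm b) nrm_pos //; case: (hB b bB).
by move=> cB; exists c => //; rewrite -/(nrm c) nrm_pos //; case: (hB c cB).
Qed.

Lemma good_step i B : good B -> good (ws i B).
Proof.
move=> [hB hO]; rewrite wset1E; split.
  move=> c /imfsetP [b bB ->] /=; apply: nrm_root; apply: root_rf; by case: (hB b bB).
move=> c c' /imfsetP [b bB ->] /imfsetP [b' b'B ->] /= ne.
have bb' : b != b' by apply: contraNneq ne => ->.
case: (nrm_sign (rf i b)) => ->; case: (nrm_sign (rf i b')) => ->;
  by rewrite ?bformNl ?bformNr bf_rf hO ?oppr0.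
Qed.

Lemma good_orbit B s : good B -> good (wact_set adj s B).
Proof.
move=> gB; elim: s => [|i s IH]; first by rewrite good_nil.
rewrite wset_cons; first exact: good_step.
by move=> b bB; case: gB => [/(_ b bB) []].
Qed.

Lemma good_roots B : good B -> forall b, b \in B -> bf b b = 2.
Proof. by move=> [hB _] b /hB []. Qed.

Lemma wset_inv i B : good B -> ws i (ws i B) = B.
Proof.
move=> gB; rewrite -wset_cons; last exact: good_roots gB.
apply/fsetP => c; apply/imfsetP/idP => /=.
  move=> [b bB ->]; rewrite rfK -/(nrm b) nrm_pos //; by case: gB => [/(_ b bB) []].
move=> cB; exists c => //; rewrite rfK -/(nrm c) nrm_pos //; by case: gB => [/(_ c cB) []].
Qed.

Lemma rf_pos i B b : good B -> alpha i \notin B -> b \in B -> rpos (rf i b).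
Proof.
move=> [hB _] na bB; case: (hB b bB) => r hp; apply: rpos_rf => //.
by apply: contraNneq na => <-.
Qed.

Lemma wset_mem i B c : good B -> alpha i \notin B ->
  (c \in ws i B) <-> exists2 b, b \in B & c = rf i b.
Proof.
move=> gB na; split.
  move=> /imfsetP [b bB ->] /=; exists b => //; rewrite -/(nrm _) nrm_pos //.
  exact: rf_pos gB na bB.
move=> [b bB ->]; apply/imfsetP; exists b => //=; rewrite -/(nrm _) nrm_pos //.
exact: rf_pos gB na bB.
Qed.

Lemma rf_orth i x : p i x = 0 -> rf i x = x.
Proof. by rewrite rfE => ->; rewrite scale0r subr0. Qed.

Lemma rf_alpha i : rf i (alpha i) = - alpha i.
Proof.
rewrite rfE /p alpha_root; apply/rowP => k; rewrite !mxE; ring.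
Qed.

Lemma alpha_in i B : good B -> alpha i \in B -> ws i B = B.
Proof.
move=> [hB hO] aB; apply/fsetP => c; apply/imfsetP/idP => /=.
  move=> [b bB ->]; rewrite -/(nrm _).
  have [->|ba] := eqVneq b (alpha i).
    by rewrite rf_alpha nrmN ?alpha_root // nrm_pos //; case: (hB _ aB).
  rewrite rf_orth; last exact: hO.
  by rewrite nrm_pos //; case: (hB b bB).
move=> cB; have [->|ca] := eqVneq c (alpha i).
  exists (alpha i) => //; rewrite -/(nrm _) rf_alpha nrmN ?alpha_root // nrm_pos //.
  by case: (hB _ aB).
exists c => //; rewrite -/(nrm _) rf_orth; last exact: hO.
by rewrite nrm_pos //; case: (hB c cB).
Qed.

Lemma p_rangeB i B b : good B -> alpha i \notin B -> b \in B -> -1 <= p i b <= 1.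
Proof.
move=> [hB _] na bB; case: (hB b bB) => r hp; apply: p_range => //.
by apply: contraNneq na => <-.
Qed.
Implicit Types B C D : {fset vec n}.

Lemma bf_rfl i x y : bf (rf i x) y = bf x y - p i x * p i y.
Proof. by rewrite rfE bformBl bformZl (bformC (alpha i) y). Qed.

Lemma bf_rfr i x y : bf y (rf i x) = bf y x - p i x * p i y.
Proof. by rewrite bformC bf_rfl (bformC x). Qed.

Lemma rf_fix i x : rf i x = x -> p i x = 0.
Proof. move=> e; have := p_rf i i x; rewrite e cart_ii; lia. Qed.

Lemma F1 i B b c : good B -> b \in B -> c \in B -> p i b = 1 -> p i c = -1 ->
  rht b != rht c + 1.
Proof.
move=> [hB hO] bB cB pb pc.
have bc : b != c by apply/eqP => e; move: pb pc; rewrite e; lia.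
have rb : bf b b = 2 by case: (hB b bB).
have rc : bf c c = 2 by case: (hB c cB).
have := @L0 (rf i b) c (root_rf i rb) rc.
rewrite bf_rfl hO // pb pc rht_rf pb => /(_ erefl).
by apply: contra => /eqP ->; rewrite addrK.
Qed.

Definition upw i B := exists x, [/\ x \in B, p i x = -1 &
  forall b, b \in B -> p i b = 1 -> rht x < rht b].

Lemma notin_ws i B b : good B -> alpha i \notin B -> b \in B -> p i b != 0 ->
  b \notin ws i B.
Proof.
move=> gB na bB pb; apply/negP => /(wset_mem _ gB na) [b' b'B e].
have pb' : p i b' != 0 by move: pb; rewrite e p_rf cart_ii; apply: contraNneq => ->; rewrite mul0r subr0.
have bb' : b' != b by apply: contraNneq pb' => be; apply/eqP/rf_fix; rewrite -e be.
have := (proj2 gB) b' b b'B bB bb'; rewrite e bf_rfr.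
have /andP [l u] := p_rangeB gB na b'B; have rb' := good_roots gB b'B.
rewrite rb'; move: pb'; nia.
Qed.

Lemma out_ws i B b : good B -> alpha i \notin B -> b \in B -> p i b != 0 ->
  rf i b \in ws i B `\` B.
Proof.
move=> gB na bB pb; rewrite in_fsetD; apply/andP; split.
  apply/negP => rbB.
  have /andP [l u] := p_rangeB gB na bB; have rb := good_roots gB bB.
  have bb' : rf i b != b by apply: contra pb => /eqP /rf_fix ->.
  have := (proj2 gB) _ _ rbB bB bb'; rewrite bf_rfl rb; move: pb; nia.
by apply/(wset_mem _ gB na); exists b.
Qed.

Lemma in_ws0 i B b : good B -> alpha i \notin B -> b \in B -> p i b = 0 ->
  b \in ws i B.
Proof. by move=> gB na bB pb; apply/(wset_mem _ gB na); exists b; rewrite // rf_orth. Qed.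

Lemma alpha_notin_up i B : good B -> upw i B -> alpha i \notin B.
Proof.
move=> [hB hO] [x [xB px _]]; apply/negP => aB.
have xa : x != alpha i by apply/eqP => e; move: px; rewrite e /p alpha_root.
by move: (hO x _ xB aB xa); rewrite -/(p i x) px.
Qed.

Lemma up_iff i B : good B -> (mprec B (ws i B) <-> upw i B).
Proof.
move=> gB; split.
  move=> [ne [_ [b [bBC hb]]]].
  have na : alpha i \notin B.
    by apply/negP => aB; move: ne; rewrite alpha_in // eqxx.
  move: bBC; rewrite in_fsetD => /andP [bC bB].
  have pb : p i b != 0 by apply: contraNneq bC => pb; exact: in_ws0.
  have := hb _ (out_ws gB na bB pb); rewrite rht_rf => hb1.
  have /andP [l u] := p_rangeB gB na bB.
  exists b; split => //; first by move: pb hb1; lia.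
  move=> c cB pc; have pc0 : p i c != 0 by rewrite pc.
  have := hb _ (out_ws gB na cB pc0); rewrite rht_rf pc; lia.
move=> hup; have na := alpha_notin_up gB hup; case: hup => [x [xB px xmin]].
have px0 : p i x != 0 by rewrite px.
have [m [mB pm mmin]] := @fset_min B (fun y => p i y == -1) (@rht n)
   (ex_intro _ x (conj xB (introT eqP px))).
move/eqP: pm => pm; have pm0 : p i m != 0 by rewrite pm.
split; last split.
- apply/negP => /eqP e; have := notin_ws gB na xB px0; rewrite -e xB //.
- by exists (rf i x); exact: out_ws.
exists m; split; first by rewrite in_fsetD mB andbT; exact: notin_ws.
move=> c; rewrite in_fsetD => /andP [cB /(wset_mem _ gB na) [b bB ec]]; subst c.
have /andP [l u] := p_rangeB gB na bB.
rewrite rht_rf.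
have pb0 : p i b != 0 by apply/negP => /eqP pb; move: cB; rewrite rf_orth // bB.
have [pb1|pbn] := eqVneq (p i b) 1.
  have h1 := F1 gB bB mB pb1 pm.
  have h2 := mmin x xB (introT eqP px).
  have h3 := xmin b bB pb1.
  move: h1 h2 h3; rewrite pb1; lia.
have pbm : p i b = -1 by move: pb0 pbn l u; lia.
have := mmin b bB (introT eqP pbm); rewrite pbm; lia.
Qed.

Lemma mprec_asym B C : mprec B C -> mprec C B -> False.
Proof.
move=> [_ [_ [b [bBC hb]]]] [_ [_ [c [cCB hc]]]].
have := hb c cCB; have := hc b bBC; lia.
Qed.

Lemma p_rf_self i x : p i (rf i x) = - p i x.
Proof. rewrite p_rf cart_ii; ring. Qed.

Lemma dn_up i B z : good B -> alpha i \notin B -> z \in B -> p i z = 1 ->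
  (forall b, b \in B -> p i b = -1 -> rht z <= rht b) -> upw i (ws i B).
Proof.
move=> gB na zB pz hz; exists (rf i z); split.
- by apply/(wset_mem _ gB na); exists z.
- by rewrite p_rf_self pz.
move=> c /(wset_mem _ gB na) [b bB ->]; rewrite p_rf_self => pb.
have pb' : p i b = -1 by lia.
have := hz b bB pb'; rewrite !rht_rf pz pb'; lia.
Qed.

Lemma all_fix i B : good B -> alpha i \notin B ->
  (forall b, b \in B -> p i b = 0) -> ws i B = B.
Proof.
move=> gB na h; apply/fsetP => c; apply/idP/idP.
  by move/(wset_mem _ gB na) => [b bB ->]; rewrite rf_orth // h.
by move=> cB; apply/(wset_mem _ gB na); exists c; rewrite // rf_orth // h.
Qed.

Lemma tri_w i B : good B -> ws i B != B -> upw i B \/ upw i (ws i B).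
Proof.
move=> gB ne.
have na : alpha i \notin B by apply/negP => aB; move: ne; rewrite alpha_in // eqxx.
have [hx|hx] := boolP (has (fun x => p i x != 0) B); last first.
  move: ne; rewrite all_fix ?eqxx // => b bB.
  by move/hasPn: hx => /(_ b bB) /negPn /eqP.
have [x xB px] := hasP hx.
have [m [mB pm mmin]] := @fset_min B (fun y => p i y != 0) (@rht n)
   (ex_intro _ x (conj xB px)).
have /andP [l u] := p_rangeB gB na mB.
have [pm1|pmn] := eqVneq (p i m) 1.
  right; apply: (dn_up gB na mB pm1) => b bB pb; apply: mmin => //; by rewrite pb.
have pmm : p i m = -1 by move: pm pmn l u; lia.
have [hz|hz] := boolP (has (fun z => (p i z == 1) && (rht z == rht m)) B).
  have [z zB /andP [/eqP pz /eqP hzm]] := hasP hz.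
  right; apply: (dn_up gB na zB pz) => b bB pb; rewrite hzm; apply: mmin => //; by rewrite pb.
left; exists m; split => // b bB pb.
have := mmin b bB; rewrite pb => /(_ erefl) le.
move/hasPn: hz => /(_ b bB); rewrite pb eqxx /= => ne'.
by rewrite lt_neqAle le andbT eq_sym.
Qed.

Lemma tri i B : good B -> ws i B != B -> mprec B (ws i B) \/ mprec (ws i B) B.
Proof.
move=> gB ne; case: (tri_w gB ne) => h; [left|right].
  by apply/up_iff.
by rewrite -{2}(wset_inv i gB); apply/up_iff => //; exact: good_step.
Qed.

Lemma up_ws i j B : good B -> alpha j \notin B ->
  (exists w, [/\ w \in B, p i w - p j w * cart j i = -1 &
     forall b, b \in B -> p i b - p j b * cart j i = 1 ->
       rht w - p j w < rht b - p j b]) -> upw i (ws j B).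
Proof.
move=> gB na [w [wB pw hw]]; exists (rf j w); split.
- by apply/(wset_mem _ gB na); exists w.
- by rewrite p_rf.
move=> c /(wset_mem _ gB na) [b bB ->]; rewrite p_rf => pb.
by rewrite !rht_rf; apply: hw.
Qed.

Lemma pos_neq0 B b : good B -> b \in B -> 0 < rht b.
Proof.
move=> [hB _] bB; case: (hB b bB) => r hp; apply: rpos_ht => //; exact: root_neq0.
Qed.

Lemma aij_root i j : cart i j = -1 -> bf (alpha i + alpha j) (alpha i + alpha j) = 2.
Proof. move=> c; rewrite bf_expandD !alpha_root bf_alpha c; lia. Qed.

Lemma p_aij k i j b : bf b (alpha i + alpha j) = p i b + p j b.
Proof. by rewrite bformDr. Qed.

Lemma both1 i j B b : cart i j = -1 -> good B -> upw i B -> b \in B ->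
  p i b = 1 -> p j b = 1 -> False.
Proof.
move=> c gB ui bB pi pj.
have e : b = alpha i + alpha j.
  apply: (bf_eq2 (good_roots gB bB) (aij_root c)).
  by rewrite bformDr -/(p i b) -/(p j b) pi pj.
case: ui => [x [xB px xmin]].
have := xmin b bB pi; rewrite e rhtD !rht_alpha => hx.
have := pos_neq0 gB xB => hx0.
have xb : x != b by apply/eqP => xe; move: px; rewrite xe pi.
have := (proj2 gB) x b xB bB xb; rewrite e bformDr -/(p i x) -/(p j x) px => hpj.
have pjx : p j x = 1 by lia.
have := @L0 x (alpha j) (good_roots gB xB) (alpha_root j) pjx.
rewrite rht_alpha; lia.
Qed.

Lemma bothN1 i j B b : cart i j = -1 -> good B -> b \in B ->
  p i b = -1 -> p j b = -1 -> False.
Proof.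
move=> c gB bB pi pj.
have e : b = - (alpha i + alpha j).
  apply: (bf_eqN2 (good_roots gB bB) (aij_root c)).
  by rewrite bformDr -/(p i b) -/(p j b) pi pj.
have := pos_neq0 gB bB; rewrite e rhtN rhtD !rht_alpha; lia.
Qed.

Lemma L2 k l B b c : cart k l = -1 -> good B -> b \in B -> c \in B ->
  p k b = 0 -> p k c = 0 -> p l b = 1 -> p l c = -1 -> rht b != rht c + 2.
Proof.
move=> ckl gB bB cB pkb pkc plb plc.
have bc : b != c by apply/eqP => e; move: plb plc; rewrite e; lia.
have o := (proj2 gB) b c bB cB bc.
set v := b - c - alpha l.
have rv : bf v v = 2.
  rewrite /v bf_expand bf_expand (good_roots gB bB) (good_roots gB cB) alpha_root.
  rewrite o bformBl -/(p l b) -/(p l c) plb plc; lia.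
have pv : bf v (alpha k) = 1.
  rewrite /v !bformBl -/(p k b) -/(p k c) bf_alpha cartC ckl pkb pkc; lia.
have := L0 rv (alpha_root k) pv; rewrite /v !rhtB rht_alpha.
rewrite (rht_alpha k) => h; apply/eqP => e; move/eqP: h; apply; lia.
Qed.

Lemma F1' i B b c : good B -> b \in B -> c \in B -> p i c = -1 ->
  p i b = 1 -> rht b <> rht c + 1.
Proof. by move=> gB bB cB pc pb; apply/eqP; exact: F1 gB bB cB pb pc. Qed.

Lemma L2' k l B b c : cart k l = -1 -> good B -> b \in B -> c \in B ->
  p k c = 0 -> p l c = -1 -> p k b = 0 -> p l b = 1 -> rht b <> rht c + 2.
Proof. by move=> ckl gB bB cB pkc plc pkb plb; apply/eqP; exact: L2 ckl gB bB cB pkb pkc plb plc. Qed.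

Lemma rng i B b : good B -> upw i B -> b \in B -> -1 <= p i b /\ p i b <= 1.
Proof. by move=> gB ui bB; apply/andP; apply: p_rangeB gB (alpha_notin_up gB ui) bB. Qed.

Lemma C2a i j B : cart i j = -1 -> good B -> upw i B -> upw j B -> upw i (ws j B).
Proof.
move=> c gB ui uj; have cji : cart j i = -1 by rewrite cartC.
have cij' : cart j i = -1 by [].
have naj := alpha_notin_up gB uj.
have ui' := ui; have uj' := uj.
case: ui' => [x [xB px xmin]]; case: uj' => [y [yB py ymin]].
have [lx ux] := rng gB uj xB; have [ly uy] := rng gB ui yB.
have nx : p j x <> -1 by move=> h; exact: bothN1 c gB xB px h.
have ny : p i y <> -1 by move=> h; exact: bothN1 c gB yB h py.
have hx1 : p j x = 1 -> rht y < rht x by exact: ymin.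
have hx2 : p j x = 1 -> rht x <> rht y + 1 by exact: F1' gB xB yB py.
have hy1 : p i y = 1 -> rht x < rht y by exact: xmin.
have hy2 : p i y = 1 -> rht y <> rht x + 1 by exact: F1' gB yB xB px.
have key : forall w, w \in B -> p i w + p j w = -1 ->
    (forall b, b \in B -> -1 <= p i b <= 1 -> -1 <= p j b <= 1 ->
       ~ (p i b = 1 /\ p j b = 1) ->
       (p i b = 1 -> rht x < rht b) -> (p i b = 1 -> rht b <> rht x + 1) ->
       (p j b = 1 -> rht y < rht b) -> (p j b = 1 -> rht b <> rht y + 1) ->
       (p i b = 0 -> p i y = 0 -> p j b = 1 -> rht b <> rht y + 2) ->
       p i b + p j b = 1 -> rht w - p j w < rht b - p j b) ->
    upw i (ws j B).
  move=> w wB pw hw; apply: (up_ws gB naj); exists w; split => //.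
    by rewrite cji; lia.
  move=> b bB; rewrite cji => pb.
  have [lb ub] := rng gB ui bB; have [lb' ub'] := rng gB uj bB.
  apply: hw => //; first (by apply/andP); first (by apply/andP); last lia.
  - by move=> [h1 h2]; exact: both1 c gB ui bB h1 h2.
  - exact: xmin.
  - exact: F1' gB bB xB px.
  - exact: ymin.
  - exact: F1' gB bB yB py.
  - by move=> h1 h2; exact: L2' c gB bB yB h2 py h1.
have [pjx1|pjx1] := eqVneq (p j x) 1.
  have piy0 : p i y = 0.
    have : p i y <> 1 by move=> h; have := hx1 pjx1; have := hy1 h; lia.
    lia.
  apply: (key y yB); first lia.
  move=> b _ /andP [? ?] /andP [? ?] nb h1 h2 h3 h4 h5 hb; lia.
have pjx0 : p j x = 0 by move/eqP: pjx1; lia.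
have [piy1|piy1] := eqVneq (p i y) 1.
  apply: (key x xB); first lia.
  move=> b _ /andP [? ?] /andP [? ?] nb h1 h2 h3 h4 h5 hb; lia.
have piy0 : p i y = 0 by move/eqP: piy1; lia.
have [le|lt] := lerP (rht x) (rht y).
  apply: (key x xB); first lia.
  move=> b _ /andP [? ?] /andP [? ?] nb h1 h2 h3 h4 h5 hb; lia.
apply: (key y yB); first lia.
move=> b _ /andP [? ?] /andP [? ?] nb h1 h2 h3 h4 h5 hb; lia.
Qed.

Lemma C2b i j B : cart i j = -1 -> good B -> upw i B -> upw j B ->
  upw j (ws i (ws j B)).
Proof.
move=> c gB ui uj; have cji : cart j i = -1 by rewrite cartC.
have naj := alpha_notin_up gB uj.
have gC := good_step j gB.
have nai := alpha_notin_up gC (C2a c gB ui uj).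
have ui' := ui; case: ui' => [x [xB px xmin]].
have [lx ux] := rng gB uj xB.
have nx : p j x <> -1 by move=> h; exact: bothN1 c gB xB px h.
apply: (up_ws gC nai); exists (rf j x); split.
- by apply/(wset_mem _ gB naj); exists x.
- by rewrite !p_rf cji c cart_ii px; lia.
move=> c0 /(wset_mem _ gB naj) [b bB ->].
rewrite !p_rf !rht_rf ?p_rf cji c cart_ii => pb.
have pib : p i b = 1 by lia.
have [lb ub] := rng gB uj bB.
have nb : p j b <> 1 by move=> h; exact: both1 c gB ui bB pib h.
have h1 := xmin b bB pib.
have h2 := F1' gB bB xB px pib.
have h3 : p j x = 0 -> p j b = 0 -> rht b <> rht x + 2.
  by move=> e1 e2; exact: L2' cji gB bB xB e1 px e2 pib.
lia.
Qed.


Lemma C1key i j B b x : cart i j = 0 -> good B -> b \in B -> x \in B ->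
  p i b = 1 -> p j b = 1 -> p i x = -1 -> p j x = -1 ->
  x = b - alpha i - alpha j.
Proof.
move=> c gB bB xB pib pjb pix pjx.
have bx : b != x by apply/eqP => e; move: pib pix; rewrite e; lia.
have o := (proj2 gB) b x bB xB bx.
set u := b - alpha i - alpha j.
have uu : bf u u = 2.
  rewrite /u bf_expand bf_expand (good_roots gB bB) !alpha_root bformBl.
  rewrite -/(p i b) -/(p j b) bf_alpha c pib pjb; lia.
have ux : bf u x = 2.
  rewrite /u !bformBl (bformC (alpha i) x) (bformC (alpha j) x) -/(p i x) -/(p j x).
  rewrite o pix pjx; lia.
apply/eqP; rewrite eq_sym -subr_eq0; apply/eqP/bf_eq0.
rewrite bf_expand uu ux (good_roots gB xB); lia.
Qed.

Lemma C1 i j B : cart i j = 0 -> good B ->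
  (forall g, g \in ws j B -> g - alpha i + alpha j \in ws j B ->
     ws i (ws j B) = ws j (ws j B)) ->
  upw i B -> upw j B -> ws i B != ws j B -> upw i (ws j B).
Proof.
move=> c gB adm ui uj ne; have cji : cart j i = 0 by rewrite cartC.
have naj := alpha_notin_up gB uj.
have ui' := ui; case: ui' => [x [xB px xmin]].
apply: (up_ws gB naj); exists x; split => //; first by rewrite cji px; lia.
move=> b bB; rewrite cji !mulr0 !subr0 => pib.
have [lx ux] := rng gB uj xB; have [lb ub] := rng gB uj bB.
have h1 := xmin b bB pib.
have h2 := F1' gB bB xB px pib.
have [//|hge] := ltrP (rht x - p j x) (rht b - p j b).
have pjx : p j x = -1 by lia.
have pjb : p j b = 1 by lia.
have ex := C1key c gB bB xB pib pjb px pjx.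
have gC : rf j b \in ws j B by apply/(wset_mem _ gB naj); exists b.
have hC : rf j b - alpha i + alpha j \in ws j B.
  apply/(wset_mem _ gB naj); exists x => //.
  rewrite !rfE pjb pjx ex; apply/rowP => k; rewrite !mxE; ring.
have := adm _ gC hC; rewrite wset_inv // => e.
have := congr1 (fun C => ws i C) e; rewrite /= wset_inv; last exact: good_step.
by move=> e2; move: ne; rewrite e2 eqxx.
Qed.

Lemma wactD s x y : wact adj s (x + y) = wact adj s x + wact adj s y.
Proof. by elim: s => //= i s ->; rewrite rfD. Qed.
Lemma wactZ s a x : wact adj s (a *: x) = a *: wact adj s x.
Proof. by elim: s => //= i s ->; rewrite rfZ. Qed.
Lemma wact0 s : wact adj s 0 = 0.
Proof. by move: (wactZ s 0 0); rewrite !scale0r. Qed.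

Lemma weqb_wact t s : weqb adj t s -> forall v, wact adj t v = wact adj s v.
Proof.
move=> /forallP h v; rewrite (row_sum_delta v).
rewrite !(big_morph (wact adj _) (wactD _) (wact0 _)).
apply: eq_bigr => j _; rewrite !wactZ -alpha_delta; congr (_ *: _); exact/eqP/h.
Qed.

Lemma weqb_set t s B : weqb adj t s -> wact_set adj t B = wact_set adj s B.
Proof.
move=> h; apply/fsetP => c; apply/imfsetP/imfsetP => /= [[b bB ->]|[b bB ->]];
  by exists b => //; rewrite (weqb_wact h).
Qed.

Lemma weqb_refl s : weqb adj s s.
Proof. by apply/forallP. Qed.

Lemma wlen_le u s : weqb adj u s -> (wlen adj s <= size u)%N.
Proof.
move=> h; rewrite /wlen; case: ex_minnP => m _ hm; apply: hm.
by apply/existsP; exists (in_tuple u).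
Qed.

Lemma wlen_wit s : exists t : (wlen adj s).-tuple 'I_n, weqb adj t s.
Proof. by rewrite /wlen; case: ex_minnP => m /existsP [t ht] _; exists t. Qed.

Lemma wlen_size s : (wlen adj s <= size s)%N.
Proof. exact/wlen_le/weqb_refl. Qed.

Lemma ws2 i j B : good B -> ws i (ws j B) = wact_set adj [:: i; j] B.
Proof. by move=> gB; rewrite [RHS]wset_cons //; exact: good_roots. Qed.

Lemma ws3 i j k B : good B -> ws i (ws j (ws k B)) = wact_set adj [:: i; j; k] B.
Proof.
move=> gB; rewrite [RHS]wset_cons -?ws2 //; exact: good_roots.
Qed.

Lemma set_eq s t B : (forall v, wact adj s v = wact adj t v) ->
  wact_set adj s B = wact_set adj t B.
Proof.
move=> h; apply/fsetP => c; apply/imfsetP/imfsetP => /= [[b bB ->]|[b bB ->]];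
  by exists b => //; rewrite h.
Qed.

Lemma ws_comm i j B : cart i j = 0 -> good B -> ws i (ws j B) = ws j (ws i B).
Proof. by move=> c gB; rewrite !ws2 //; apply: set_eq => v /=; rewrite rf_comm. Qed.

Lemma ws_braid i j B : cart i j = -1 -> good B ->
  ws i (ws j (ws i B)) = ws j (ws i (ws j B)).
Proof. by move=> c gB; rewrite !ws3 //; apply: set_eq => v /=; rewrite rf_braid. Qed.

Variable B0 : {fset vec n}.
Hypothesis gB0 : good B0.
Hypothesis hadm : admissible adj B0.
Hypothesis hmax : forall C, in_Borbit adj B0 C -> ~ mlt adj B0 B0 C.

Definition reach B (m : nat) := [exists t : m.-tuple 'I_n, wact_set adj t B0 == B].
Definition Dl B (m : nat) := reach B m /\ forall m', (m' < m)%N -> ~~ reach B m'.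

Lemma reach_good B (m : nat) : reach B m -> good B.
Proof. by move/existsP => [t /eqP <-]; exact: good_orbit. Qed.

Lemma reach_orbit B (m : nat) : reach B m -> in_Borbit adj B0 B.
Proof. by move/existsP => [t /eqP <-]; exists t. Qed.

Lemma reach_step i B (m : nat) : reach B m -> reach (ws i B) m.+1.
Proof.
move/existsP => [t /eqP <-]; apply/existsP; exists [tuple of i :: t].
by rewrite /= wset_cons //; exact: good_roots.
Qed.

Lemma reach_back i B (m : nat) : good B -> reach (ws i B) m -> reach B m.+1.
Proof. by move=> gB /(reach_step i); rewrite wset_inv. Qed.

Lemma Dl_uniq B m m' : Dl B m -> Dl B m' -> m = m'.
Proof.
move=> [r1 h1] [r2 h2]; apply/eqP; rewrite eqn_leq.
by apply/andP; split; rewrite leqNgt; apply/negP => lt;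
  [move: (h1 _ lt); rewrite r2 | move: (h2 _ lt); rewrite r1].
Qed.

Lemma Dl_ex B m : reach B m -> exists m', Dl B m'.
Proof.
move=> r; have ex : exists m, reach B m by exists m.
case: (ex_minnP ex) => m' r' mn; exists m'; split => // m'' lt.
by apply/negP => /mn; rewrite leqNgt lt.
Qed.

Lemma Dl_reach B m : Dl B m -> reach B m.
Proof. by case. Qed.

Lemma Dl_min B m m' : Dl B m -> reach B m' -> (m <= m')%N.
Proof. by move=> [_ h] r; rewrite leqNgt; apply/negP => /h; rewrite r. Qed.

Lemma Dl_step i B m m' : Dl B m -> Dl (ws i B) m' -> (m' <= m.+1)%N /\ (m <= m'.+1)%N.
Proof.
move=> d1 d2; have gB := reach_good (Dl_reach d1); split.
  exact: Dl_min d2 (reach_step i (Dl_reach d1)).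
exact: Dl_min d1 (reach_back gB (Dl_reach d2)).
Qed.

Lemma Dl0 B : Dl B 0 -> B = B0.
Proof.
move=> [/existsP [t /eqP <-] _]; rewrite tuple0 /=; exact: good_nil.
Qed.

Lemma Dl_pred B m : Dl B m.+1 -> exists j, Dl (ws j B) m.
Proof.
move=> [/existsP [t /eqP eB] hmin]; case/tupleP: t eB => j t eB.
have gt := good_orbit t gB0.
have e : ws j B = wact_set adj t B0.
  rewrite -eB /= (@wset_cons j t B0) ?wset_inv //; exact: good_roots.
exists j; split; first by apply/existsP; exists t; rewrite e.
move=> m' lt; apply/negP => r.
have := reach_back (reach_good (Dl_reach (conj (introT existsP (ex_intro _ [tuple of j :: t] (introT eqP eB))) hmin))) r.
by move/(Dl_min (conj (introT existsP (ex_intro _ [tuple of j :: t] (introT eqP eB))) hmin)); rewrite leqNgt ltnS lt.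
Qed.

Definition up i B := mprec B (ws i B).
Definition Ga (m : nat) := forall B i (m' : nat), Dl B m -> Dl (ws i B) m' -> (m' < m)%N -> up i B.
Definition Gb (m : nat) := forall B i, Dl B m -> Dl (ws i B) m -> ws i B = B.

Lemma orbit0 : in_Borbit adj B0 B0.
Proof. by exists [::]; rewrite good_nil. Qed.

Lemma hmax_up i : up i B0 -> False.
Proof.
move=> u; have o : in_Borbit adj B0 (ws i B0).
  by apply: (reach_orbit (m := 1)); apply: reach_step; apply/existsP; exists [tuple]; rewrite /= good_nil.
apply: (hmax o); apply: mlt_step; split; first exact: orbit0.
by exists i.
Qed.

Lemma Dl_good B m : Dl B m -> good B.
Proof. by move/Dl_reach/reach_good. Qed.

Lemma aprime (m : nat) : Gb m -> Ga m.+1 -> forall B i, Dl B m -> up i B ->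
  (0 < m)%N /\ Dl (ws i B) m.-1.
Proof.
move=> gb ga B i d u; have gB := Dl_good d.
have [m' d'] := Dl_ex (reach_step i (Dl_reach d)).
have [l1 l2] := Dl_step d d'.
have [e|ne] := eqVneq m' m.
  subst m'; have e := gb B i d d'; move: u; rewrite /up e => [[]]; rewrite eqxx //.
have [e|ne'] := eqVneq m' m.+1.
  subst m'; have d2 : Dl (ws i (ws i B)) m by rewrite wset_inv.
  have u2 := ga (ws i B) i m d' d2 (ltnSn m).
  by move: u2; rewrite /up wset_inv // => u2; case: (mprec_asym u u2).
have lt : (m' < m)%N.
  by rewrite ltn_neqAle ne /=; move: l1; rewrite leq_eqVlt (negPf ne') /= ltnS.
have em : m = m'.+1 by apply/eqP; rewrite eqn_leq l2 lt.
by subst m; split.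
Qed.

Lemma cart_cases i j : i != j -> cart i j = 0 \/ cart i j = -1.
Proof. by move=> ij; rewrite /cart (negPf ij); case: (adj i j); [right|left]. Qed.

Lemma up_upw i B : good B -> up i B -> upw i B.
Proof. by move=> gB /(up_iff _ gB). Qed.
Lemma upw_up i B : good B -> upw i B -> up i B.
Proof. by move=> gB /(up_iff _ gB). Qed.

Lemma Bot (l : nat) : (forall m, (m < l)%N -> Gb m) -> (forall m, (m <= l)%N -> Ga m) ->
  forall X i (l' : nat), Dl X l -> up i X -> Dl (ws i X) l' -> (l <= l')%N -> False.
Proof.
move=> gb ga X i l' dx ux dix ll'.
have gx := Dl_good dx.
case: l gb ga dx ll' => [|m] gb ga dx ll'.
  by move: ux; rewrite (Dl0 dx); exact: hmax_up.
have [j dj] := Dl_pred dx.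
have uj : up j X := ga m.+1 (leqnn _) X j m dx dj (ltnSn m).
have ij : i != j.
  by apply/eqP => e; subst j; have := Dl_uniq dix dj => e; move: ll'; rewrite e ltnn.
have gz := good_step j gx; have gix := good_step i gx.
have contra : reach (ws i X) m -> False.
  by move=> r; have := Dl_min dix r; move: ll'; lia.
case: (cart_cases ij) => c.
- have ne : ws i X != ws j X.
    by apply/eqP => e; move: dix; rewrite e => d; have := Dl_uniq d dj => e'; move: ll'; rewrite e' ltnn.
  have ox : in_Borbit adj B0 (ws j X) := reach_orbit (Dl_reach dj).
  have adm : forall g, g \in ws j X -> g - alpha i + alpha j \in ws j X ->
      ws i (ws j X) = ws j (ws j X).
    move=> g g1 g2; apply: (hadm ox (g := g)) => //.
    by rewrite /nonadj (negPf ij) /=; move: c; rewrite /cart (negPf ij); case: (adj i j).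
  have u1 := C1 c gx adm (up_upw gx ux) (up_upw gx uj) ne.
  have [m0 d1] := aprime (gb m (ltnSn m)) (ga m.+1 (leqnn _)) dj (upw_up gz u1).
  move: d1; rewrite ws_comm // => d1.
  by apply: contra; have := reach_back gix (Dl_reach d1); rewrite prednK.
have cji : cart j i = -1 by rewrite cartC.
have u1 := C2a c gx (up_upw gx ux) (up_upw gx uj).
have u2 := C2b c gx (up_upw gx ux) (up_upw gx uj).
have [m0 d1] := aprime (gb m (ltnSn m)) (ga m.+1 (leqnn _)) dj (upw_up gz u1).
have gzi := good_step i gz.
have hle : (m.-1.+1 <= m.+1)%N by rewrite prednK // leqnSn.
have [m1 d2] := aprime (gb m.-1 (leq_ltn_trans (leq_pred m) (ltnSn m)))
   (ga m.-1.+1 hle) d1 (upw_up gzi u2).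
move: d2; rewrite ws_braid // => d2.
have gjix := good_step j gix.
apply: contra; have := reach_back gix (reach_back gjix (Dl_reach d2)).
by rewrite !prednK.
Qed.

Lemma graded (m : nat) : Ga m /\ Gb m.
Proof.
elim/ltn_ind: m => m IH.
have gA : Ga m.
  move=> B i m' dB dB' lt.
  have [l1 l2] := Dl_step dB dB'.
  case: m IH dB lt l1 l2 => [|l] IH dB lt l1 l2; first by [].
  have em' : m' = l by apply/eqP; rewrite eqn_leq -ltnS lt /=; exact: l2.
  subst m'.
  have gB := Dl_good dB.
  have ne : ws i B != B.
    by apply/eqP => e; move: dB'; rewrite e => d; have := Dl_uniq d dB; lia.
  case: (tri gB ne) => // h.
  have uy : up i (ws i B) by rewrite /up wset_inv.
  have dB2 : Dl (ws i (ws i B)) l.+1 by rewrite wset_inv.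
  case: (Bot (l := l) (fun m0 lt0 => proj2 (IH m0 (ltn_trans lt0 (ltnSn l))))
     (fun m0 le0 => proj1 (IH m0 (leq_ltn_trans le0 (ltnSn l)))) dB' uy dB2 (leqnSn l)).
split => // B i dB dB'.
have gB := Dl_good dB.
have [//|ne] := eqVneq (ws i B) B.
have gb : forall m0, (m0 < m)%N -> Gb m0 by move=> m0 lt0; exact: proj2 (IH m0 lt0).
have ga : forall m0, (m0 <= m)%N -> Ga m0.
  move=> m0; rewrite leq_eqVlt => /orP [/eqP -> //|lt0]; exact: proj1 (IH m0 lt0).
case: (tri gB ne) => h.
  by case: (Bot gb ga dB h dB' (leqnn m)).
have uy : up i (ws i B) by rewrite /up wset_inv.
have dB2 : Dl (ws i (ws i B)) m by rewrite wset_inv.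
by case: (Bot gb ga dB' uy dB2 (leqnn m)).
Qed.

Lemma orbit_reach B : in_Borbit adj B0 B -> exists m, Dl B m.
Proof.
move=> [s ->]; apply: (Dl_ex (m := size s)); apply/existsP; exists (in_tuple s); by [].
Qed.

Lemma orbit_good B : in_Borbit adj B0 B -> good B.
Proof. by move=> [s ->]; exact: good_orbit. Qed.

Lemma orbit_step i B : in_Borbit adj B0 B -> in_Borbit adj B0 (ws i B).
Proof.
move=> [s ->]; exists (i :: s); rewrite [RHS]wset_cons //; exact: good_roots.
Qed.

Lemma mlt_orbit X Y : mlt adj B0 X Y -> in_Borbit adj B0 X /\ in_Borbit adj B0 Y.
Proof.
elim=> [{}X {}Y [oX [j [-> _]]]|{}X Z {}Y _ [oX _] _ [_ oY]] //.
by split => //; exact: orbit_step.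
Qed.

Lemma mlt_dec X Y : mlt adj B0 X Y -> forall mx my, Dl X mx -> Dl Y my -> (my < mx)%N.
Proof.
elim=> [{}X {}Y [oX [j [-> u]]]|{}X Z {}Y h1 IH1 h2 IH2] mx my dX dY.
  have [m0 d] := aprime (proj2 (graded mx)) (proj1 (graded mx.+1)) dX u.
  by rewrite (Dl_uniq dY d) prednK // leqnn.
have [mz dZ] := orbit_reach (proj2 (mlt_orbit h1)).
exact: ltn_trans (IH2 _ _ dZ dY) (IH1 _ _ dX dZ).
Qed.

Lemma wlen_reach s B : wact_set adj s B0 = B -> reach B (wlen adj s).
Proof.
move=> e; have [t ht] := wlen_wit s; apply/existsP; exists t.
by rewrite (weqb_set _ ht) e.
Qed.

Lemma minimal_Dl B s : minimal_for adj B0 B s -> Dl B (wlen adj s).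
Proof.
move=> [e hmin]; split; first exact: wlen_reach.
move=> m' lt; apply/negP => /existsP [t /eqP et].
have := hmin t et; have := wlen_size t; rewrite size_tuple => a b.
by have := leq_trans b a; rewrite leqNgt lt.
Qed.

Lemma wset_consB i s : wact_set adj (i :: s) B0 = ws i (wact_set adj s B0).
Proof. by rewrite [LHS]wset_cons //; exact: good_roots. Qed.

Lemma part1 B : in_Borbit adj B0 B ->
   forall s, minimal_for adj B0 B s ->
   forall i : 'I_n, (wlen adj (i :: s) < wlen adj s)%N ->
     mlt adj B0 B (wact_set adj [:: i] B).
Proof.
move=> oB s ms i lt.
have dB := minimal_Dl ms.
have r : reach (ws i B) (wlen adj (i :: s)).
  by apply: wlen_reach; rewrite wset_consB (proj1 ms).
have [m' d'] := Dl_ex r.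
have le := Dl_min d' r.
have u := proj1 (graded (wlen adj s)) B i m' dB d' (leq_ltn_trans le lt).
apply: mlt_step; split => //; by exists i.
Qed.

Lemma part2 B : in_Borbit adj B0 B ->
   forall s s', minimal_for adj B0 B s -> minimal_for adj B0 B s' ->
     wlen adj s = wlen adj s' /\
     forall i : 'I_n, mlt adj B0 B (wact_set adj [:: i] B) ->
       exists s'', wlen adj s'' = wlen adj s /\ wact_set adj s'' B0 = B /\
                   (wlen adj (i :: s'') < wlen adj s'')%N.
Proof.
move=> oB s s' ms ms'; split.
  by apply/eqP; rewrite eqn_leq (proj2 ms _ (proj1 ms')) (proj2 ms' _ (proj1 ms)).
move=> i h.
have gB := orbit_good oB.
have dB := minimal_Dl ms.
have [m' d'] := orbit_reach (orbit_step i oB).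
have lt := mlt_dec h dB d'.
have [_ l2] := Dl_step dB d'.
have ek : wlen adj s = m'.+1 by apply/eqP; rewrite eqn_leq l2 lt.
case/existsP: (Dl_reach d') => t /eqP et.
exists (i :: t).
have e1 : wact_set adj (i :: t) B0 = B by rewrite wset_consB et wset_inv.
have w1 : wlen adj (i :: t) = wlen adj s.
  apply/eqP; rewrite eqn_leq; apply/andP; split.
    by rewrite ek; have := wlen_size (i :: t); rewrite /= size_tuple.
  exact: Dl_min dB (wlen_reach e1).
split => //; split => //.
rewrite w1 ek ltnS.
have : weqb adj t [:: i, i & t] by apply/forallP => j /=; rewrite rfK.
by move/wlen_le; rewrite size_tuple.
Qed.

End Alg.

Lemma good_of n (adj : rel 'I_n) (adj_sym : symmetric adj) B :
  orth_pos_roots adj B -> good adj B.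
Proof.
move=> [h1 h2]; split => // b bB; case: (h1 b bB) => [[s [i <-]] hp]; split => //.
exact: (wact_root adj_sym s (alpha_root adj i)).
Qed.

Unset Implicit Arguments.
Local Open Scope ring_scope.
Local Open Scope fset_scope.

Theorem lemma3p8 (n : nat) (adj : rel 'I_n)
  (adj_sym : symmetric adj) (adj_irr : irreflexive adj)
  (spherical : forall x : vec n, x != 0 -> 0 < bform adj x x)
  (B0 : {fset vec n})
  (hB0 : orth_pos_roots adj B0)
  (hadm : admissible adj B0)
  (hmax : forall C, in_Borbit adj B0 C -> ~ mlt adj B0 B0 C)
  (huniq : forall C, in_Borbit adj B0 C ->
     (forall D, in_Borbit adj B0 D -> ~ mlt adj B0 C D) -> C = B0) :
  (forall B, in_Borbit adj B0 B ->
   forall s, minimal_for adj B0 B s ->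
   forall i : 'I_n, (wlen adj (i :: s) < wlen adj s)%N ->
     mlt adj B0 B (wact_set adj [:: i] B))
  /\
  (forall B, in_Borbit adj B0 B ->
   forall s s', minimal_for adj B0 B s -> minimal_for adj B0 B s' ->
     wlen adj s = wlen adj s' /\
     forall i : 'I_n, mlt adj B0 B (wact_set adj [:: i] B) ->
       exists s'', wlen adj s'' = wlen adj s /\ wact_set adj s'' B0 = B /\
                   (wlen adj (i :: s'') < wlen adj s'')%N).
Proof.
have gB0 := good_of adj_sym hB0.
split.
  by move=> B oB s ms i lt; exact: (part1 adj_sym spherical gB0 hadm hmax oB ms lt).
by move=> B oB s s' ms ms'; exact: (part2 adj_sym spherical gB0 hadm hmax oB ms ms').
Qed.
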